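(* Let $n\ge 2$, $q=z_n=(1,2,\dots,n)^T$ and $X=F_n(z_n)$. Then $X^TX$ is invertible and the log-prime estimator $\ln\hat q=(X^TX)^{-1}X^T\ln z_n$ satisfies, for $i=1,\dots,n$, $$(\ln\hat q)_i=\begin{cases}\ln i,& i\text{ prime},\\ 0,& i\text{ not prime}.\end{cases}$$
   Context: Logarithms of vectors are entry-wise. For $1\le i\le n$, $e_{\bar i|n}\in\mathbb{R}^n$ has $k$-th entry $1$ if $i\mid k$, else $0$. For $2\le i\le n$, $f_{i|n}=\sum_{t=1}^{\lfloor \log_i n\rfloor} e_{\overline{i^t}|n}$, and by convention $f_{1|n}=1_n$ (all-ones vector). $F_n(z_n)=[f_{1|n}\ f_{2|n}\ \cdots\ f_{n|n}]\in\mathbb{R}^{n\times n}$. *)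

(* Defs.v *)
From HB Require Import structures.
From Stdlib Require Import Reals ClassicalEpsilon FunctionalExtensionality.
From mathcomp Require Import all_boot all_order all_algebra.
Set Implicit Arguments. Unset Strict Implicit. Unset Printing Implicit Defensive.
Import GRing.Theory.

Definition Reqb (x y : R) : bool := if Req_EM_T x y then true else false.
Lemma Reqb_axiom : Equality.axiom Reqb.
Proof. by move=> x y; rewrite /Reqb; case: Req_EM_T => h; constructor. Qed.
HB.instance Definition _ := hasDecEq.Build R Reqb_axiom.

Definition Rfind (P : pred R) (n : nat) : option R :=
  match excluded_middle_informative (exists x, P x) with
  | left H => Some (proj1_sig (constructive_indefinite_description _ H))
  | right _ => None
  end.
Lemma Rfind_correct P n x : Rfind P n = Some x -> P x.
Proof.
rewrite /Rfind; case: excluded_middle_informative => // H [<-].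
exact: proj2_sig (constructive_indefinite_description _ H).
Qed.
Lemma Rfind_complete (P : pred R) : (exists x, P x) -> exists n, Rfind P n.
Proof. by move=> H; exists 0%N; rewrite /Rfind; case: excluded_middle_informative. Qed.
Lemma Rfind_ext (P Q : pred R) : P =1 Q -> Rfind P =1 Rfind Q.
Proof. by move=> /functional_extensionality ->. Qed.
HB.instance Definition _ := hasChoice.Build R Rfind_correct Rfind_complete Rfind_ext.

Lemma R_addA : ssrfun.associative Rplus. Proof. by move=> *; rewrite Rplus_assoc. Qed.
Lemma R_addC : ssrfun.commutative Rplus. Proof. exact: Rplus_comm. Qed.
Lemma R_add0 : ssrfun.left_id R0 Rplus. Proof. exact: Rplus_0_l. Qed.
Lemma R_addN : ssrfun.left_inverse R0 Ropp Rplus. Proof. exact: Rplus_opp_l. Qed.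
HB.instance Definition _ := GRing.isZmodule.Build R R_addA R_addC R_add0 R_addN.

Lemma R_mulA : ssrfun.associative Rmult. Proof. by move=> *; rewrite Rmult_assoc. Qed.
Lemma R_mulC : ssrfun.commutative Rmult. Proof. exact: Rmult_comm. Qed.
Lemma R_mul1 : ssrfun.left_id R1 Rmult. Proof. exact: Rmult_1_l. Qed.
Lemma R_mulDl : ssrfun.left_distributive Rmult Rplus.
Proof. by move=> *; rewrite Rmult_plus_distr_r. Qed.
Lemma R_one_neq0 : R1 != R0.
Proof. by apply/eqP; exact: R1_neq_R0. Qed.
HB.instance Definition _ :=
  GRing.Zmodule_isComNzRing.Build R R_mulA R_mulC R_mul1 R_mulDl R_one_neq0.

Definition Rinvx (x : R) : R := if x == R0 then R0 else Rinv x.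
Lemma R_mulVf (x : R) : x != R0 -> Rmult (Rinvx x) x = R1.
Proof. move=> h; rewrite /Rinvx (negbTE h); apply: Rinv_l; exact/eqP. Qed.
Lemma R_inv0 : Rinvx R0 = R0. Proof. by rewrite /Rinvx eqxx. Qed.
HB.instance Definition _ := GRing.ComNzRing_isField.Build R R_mulVf R_inv0.

Local Open Scope ring_scope.

(* f_{i|n}(k): for i = 1 it is 1; for 2 <= i <= n it is
   sum_{t=1}^{floor(log_i n)} [i^t | k], i.e. the k-th entry of
   sum_t e_{bar(i^t)|n}.  floor(log_i n) = trunc_log i n. *)
Definition f_entry (n i k : nat) : nat :=
  if i == 1%N then 1%N
  else (\sum_(1 <= t < (trunc_log i n).+1) (i ^ t %| k))%N.

(* F_n(z_n) = [f_{1|n} ... f_{n|n}] ; row index k (0-based, standing for k+1),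
   column index i (0-based, standing for i+1). *)
Definition Fn (n : nat) : 'M[R]_n :=
  \matrix_(k < n, i < n) (f_entry n i.+1 k.+1)%:R.

Definition zn (n : nat) : 'cV[R]_n := \col_(k < n) (INR k.+1).

Definition lnv (n : nat) (v : 'cV[R]_n) : 'cV[R]_n := \col_(k < n) ln (v k ord0).

Definition log_prime_estimator (n : nat) (X : 'M[R]_n) (y : 'cV[R]_n) : 'cV[R]_n :=
  invmx (X^T *m X) *m X^T *m lnv y.

(* Main.v *)
Require Import Defs.
From HB Require Import structures.
From Stdlib Require Import Reals Lia.
From mathcomp Require Import all_boot all_order all_algebra.
From mathcomp Require Import zify.
Import GRing.Theory.
Local Open Scope ring_scope.

Lemma natrINR (m : nat) : (m%:R : R) = INR m.
Proof.
elim: m => [|m IH]; first by [].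
by rewrite mulrS IH S_INR /= Rplus_comm.
Qed.

Lemma sum_le_min (L T : nat) :
  (\sum_(1 <= t < T.+1) (t <= L))%N = minn L T.
Proof.
elim: T => [|T IH]; first by rewrite big_geq //; lia.
rewrite big_nat_recr //= IH.
case: (leqP T.+1 L) => h /=; lia.
Qed.

Lemma f_entry_prime n p k : prime p -> (0 < k)%N -> (k <= n)%N ->
  f_entry n p k = logn p k.
Proof.
move=> pp k0 kn; rewrite /f_entry.
have p1 : (1 < p)%N by apply: prime_gt1.
have -> : (p == 1%N) = false by apply/eqP; lia.
have LT : (logn p k <= trunc_log p n)%N.
  apply: trunc_log_max => //; apply: leq_trans kn.
  by apply: dvdn_leq => //; apply: pfactor_dvdnn.
under eq_bigr => t _ do rewrite pfactor_dvdn //.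
rewrite sum_le_min; lia.
Qed.

Lemma f_entry_up n j k : (1 < j)%N -> (0 < k)%N -> (k < j)%N -> f_entry n j k = 0%N.
Proof.
move=> j1 k0 kj; rewrite /f_entry.
have -> : (j == 1%N) = false by apply/eqP; lia.
rewrite big1_seq //= => t; rewrite mem_index_iota => /andP [t1 _].
apply/eqP; rewrite eqb0; apply/negP => /(dvdn_leq k0) h.
have : (j ^ 1 <= j ^ t)%N by apply: leq_pexp2l; lia.
rewrite expn1; lia.
Qed.

Lemma f_entry_diag n j : (j <= n)%N -> (0 < j)%N -> f_entry n j j = 1%N.
Proof.
move=> jn j0; rewrite /f_entry; case: eqP => // /eqP j1.
have j2 : (1 < j)%N by lia.
have T0 : (0 < trunc_log j n)%N by rewrite trunc_log_gt0 j2 /=; lia.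
rewrite big_ltn; last by lia.
rewrite expn1 dvdnn big1_seq //= => t; rewrite mem_index_iota => /andP [t1 _].
apply/eqP; rewrite eqb0; apply/negP => /(dvdn_leq j0) h.
have : (j ^ 2 <= j ^ t)%N by apply: leq_pexp2l; lia.
have : (j < j ^ 2)%N by rewrite expnS expn1 -{1}[j]mul1n ltn_pmul2r; lia.
lia.
Qed.

Lemma ln_prod (I : Type) (r : seq I) (P : pred I) (F : I -> nat) :
  (forall i, P i -> (0 < F i)%N) ->
  ln (INR (\prod_(i <- r | P i) F i)) = \sum_(i <- r | P i) ln (INR (F i)).
Proof.
move=> HF.
pose Q := fun (x : nat) (y : R) => (0 < x)%N /\ ln (INR x) = y.
suff [] : Q (\prod_(i <- r | P i) F i) (\sum_(i <- r | P i) ln (INR (F i))) by [].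
apply: (big_ind2 Q).
- by rewrite /Q; split => //; rewrite /= ln_1.
- rewrite /Q => x1 x2 y1 y2 [h1 e1] [h2 e2]; split; first by rewrite muln_gt0 h1.
  rewrite mult_INR ln_mult; first by rewrite e1 e2.
  + by apply: lt_0_INR; apply/ltP.
  + by apply: lt_0_INR; apply/ltP.
- by rewrite /Q => i Pi; split => //; apply: HF.
Qed.

Lemma INR_expn a e : INR (a ^ e) = pow (INR a) e.
Proof. elim: e => [|e IH]; first by rewrite expn0. by rewrite expnS mult_INR IH. Qed.

Lemma ln_k n k : (0 < k)%N -> (k <= n)%N ->
  ln (INR k) = \sum_(0 <= p < n.+1) (logn p k)%:R * ln (INR p).
Proof.
move=> k0 kn.
rewrite -{1}(partnT k0) (widen_partn _ kn) ln_prod; last first.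
  by move=> p _; rewrite expn_gt0; case: p => // ; rewrite lognE.
apply: eq_bigr => p _.
case: p => [|p].
  by rewrite lognE /= ln_1 mul0r.
rewrite INR_expn ln_pow; last by apply: lt_0_INR; lia.
by rewrite natrINR.
Qed.

Theorem theorem3p4 (n : nat) (hn : (2 <= n)%N) :
  ((Fn n)^T *m Fn n) \in unitmx /\
  forall i : 'I_n,
    log_prime_estimator (Fn n) (zn n) i ord0 =
    (if prime i.+1 then ln (INR i.+1) else 0).
Proof.
have trig : is_trig_mx (Fn n).
  apply/is_trig_mxP => i j ij; rewrite mxE f_entry_up //; lia.
have det1 : \det (Fn n) = 1.
  rewrite det_trig // big1 // => i _; rewrite mxE f_entry_diag //.
have uX : Fn n \in unitmx by rewrite unitmxE det1 unitr1.
have uB : (Fn n)^T *m Fn n \in unitmx by rewrite unitmx_mul unitmx_tr uX.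
split => //.
pose v : 'cV[R]_n := \col_(i < n) (if prime i.+1 then ln (INR i.+1) else 0).
have Hv : lnv (zn n) = Fn n *m v.
  apply/matrixP => k j; rewrite (ord1 j) !mxE.
  have kn : (k.+1 <= n)%N := ltn_ord k.
  rewrite (@ln_k n) // big_nat_recl // lognE /= mul0r add0r big_mkord.
  apply: eq_bigr => i _; rewrite !mxE.
  case: (boolP (prime i.+1)) => pi.
    by rewrite f_entry_prime // ltn_ord.
  by rewrite lognE (negbTE pi) /= mul0r mulr0.
move=> i; rewrite /log_prime_estimator Hv -mulmxA (mulmxA _ (Fn n)) mulKmx //.
by rewrite mxE.
Qed.
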